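(* Let $G$ be a circle intersection graph (with at least one vertex). Then $G$ has a vertex $v$ such that the subgraph of $G$ induced on $\{v\}\cup N(v)$ does not contain an induced subgraph isomorphic to $K_{1,6}$.
   Context: A graph $G$ is a circle intersection graph if its vertices can be put in one-to-one correspondence with closed disks (circles) of arbitrary positive radii in the plane so that two vertices are adjacent if and only if the corresponding disks intersect (tangent circles are considered to intersect). $N(v)$ is the set of neighbors of $v$; $K_{1,6}$ is the star with $6$ leaves. *)

(* Defs.v *)
From mathcomp Require Import all_boot.
From Stdlib Require Import Reals.
Set Implicit Arguments. Unset Strict Implicit. Unset Printing Implicit Defensive.

Definition simple_graph (T : finType) (adj : rel T) : Prop :=
  symmetric adj /\ irreflexive adj.

Definition disks_intersect (c1x c1y r1 c2x c2y r2 : R) : Prop :=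
  (sqrt ((c1x - c2x)^2 + (c1y - c2y)^2) <= r1 + r2)%R.

Definition circle_intersection_graph (T : finType) (adj : rel T) : Prop :=
  exists (cx cy r : T -> R),
    (forall v, (0 < r v)%R) /\
    (forall u v, u != v -> (adj u v <-> disks_intersect (cx u) (cy u) (r u) (cx v) (cy v) (r v))).

Definition closed_nbhd (T : finType) (adj : rel T) (v : T) : pred T :=
  fun x => (x == v) || adj v x.

(* The subgraph of G induced on the vertex set S contains an induced K_{1,6}:
   a centre x and six distinct leaves y_0..y_5, all in S, with x adjacent to
   every leaf and the leaves pairwise non-adjacent. (Distinctness of x from
   the leaves follows from irreflexivity.) *)
Definition has_induced_K16_in (T : finType) (adj : rel T) (S : pred T) : Prop :=
  exists (x : T) (y : 'I_6 -> T),
    S x /\ (forall i, S (y i)) /\ injective y /\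
    (forall i, adj x (y i)) /\
    (forall i j, i != j -> ~~ adj (y i) (y j)).

(* Main.v *)
Require Import Defs.
From mathcomp Require Import all_boot.
From Stdlib Require Import Reals.
From Stdlib Require Import Lra Psatz Rgeom.

Open Scope R_scope.
Lemma poly_ineq a b c d : 0<=a -> 0<=b -> 0<=c -> 0<=d ->
  (a*a+a*b+b*b)*(c*c+c*d+d*d) <= (2*a*c+a*d+b*c+2*b*d)^2.
Proof. intros. assert (E: (2*a*c+a*d+b*c+2*b*d)^2 - (a*a+a*b+b*b)*(c*c+c*d+d*d) =
 (3*(a*a*c*c) + 3*(b*b*d*d) + 3*(a*a*c*d) + 3*(a*b*c*c) + 9*(a*b*c*d) + 3*(a*b*d*d) + 3*(b*b*c*d))) by ring.
assert (0 <= 3*(a*a*c*c) + 3*(b*b*d*d) + 3*(a*a*c*d) + 3*(a*b*c*c) + 9*(a*b*c*d) + 3*(a*b*d*d) + 3*(b*b*c*d)).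
{ repeat apply Rplus_le_le_0_compat; apply Rmult_le_pos; try lra; repeat apply Rmult_le_pos; lra. }
lra.
Qed.
Lemma close2 ax ay bx by_ M :
  0 <= ax*bx+ay*by_ ->
  (ax*ax+ay*ay)*(bx*bx+by_*by_) <= 4*(ax*bx+ay*by_)^2 ->
  ax*ax+ay*ay <= M -> bx*bx+by_*by_ <= M ->
  (ax-bx)^2+(ay-by_)^2 <= M.
Proof.
intros H1 H2 H3 H4.
set (A := ax*ax+ay*ay) in *. set (B := bx*bx+by_*by_) in *. set (P := ax*bx+ay*by_) in *.
replace ((ax-bx)^2+(ay-by_)^2) with (A+B-2*P) by (unfold A,B,P; ring).
assert (0<=A) by (unfold A; nra). assert (0<=B) by (unfold B; nra).
destruct (Rle_dec B A).
- assert (B*B <= 4*P^2) by nra.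
  assert (B <= 2*P) by nra. lra.
- assert (A*A <= 4*P^2) by nra.
  assert (A <= 2*P) by nra. lra.
Qed.

Lemma sector_ok p q u w ax ay bx by_ :
  p*p+q*q = 4 -> u*u+w*w = 4 -> p*u+q*w = 2 ->
  0 <= p*ay - q*ax -> 0 <= ax*w - ay*u ->
  0 <= p*by_ - q*bx -> 0 <= bx*w - by_*u ->
  0 <= ax*bx+ay*by_ /\
  (ax*ax+ay*ay)*(bx*bx+by_*by_) <= 4*(ax*bx+ay*by_)^2.
Proof.
intros h1 h2 h3 hb ha hd hc.
set (a := ax*w - ay*u) in *. set (b := p*ay - q*ax) in *.
set (c := bx*w - by_*u) in *. set (d := p*by_ - q*bx) in *.
set (k := p*w - q*u).
assert (kk : k*k = 12).
{ assert (k*k + (p*u+q*w)^2 = (p*p+q*q)*(u*u+w*w)) by (unfold k; ring).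
  rewrite h1 h2 h3 in H. lra. }
assert (e1 : k*ax = a*p+b*u) by (unfold k,a,b; ring).
assert (e2 : k*ay = a*q+b*w) by (unfold k,a,b; ring).
assert (e3 : k*bx = c*p+d*u) by (unfold k,c,d; ring).
assert (e4 : k*by_ = c*q+d*w) by (unfold k,c,d; ring).
assert (IP : 12*(ax*bx+ay*by_) = 2*(2*a*c+a*d+b*c+2*b*d)).
{ rewrite -kk.
  replace (k*k*(ax*bx+ay*by_)) with ((k*ax)*(k*bx)+(k*ay)*(k*by_)) by ring.
  rewrite e1 e2 e3 e4.
  replace ((a*p+b*u)*(c*p+d*u)+(a*q+b*w)*(c*q+d*w)) with
    (a*c*(p*p+q*q)+(a*d+b*c)*(p*u+q*w)+b*d*(u*u+w*w)) by ring.
  rewrite h1 h2 h3; ring. }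
assert (NA : 12*(ax*ax+ay*ay) = 4*(a*a+a*b+b*b)).
{ rewrite -kk.
  replace (k*k*(ax*ax+ay*ay)) with ((k*ax)*(k*ax)+(k*ay)*(k*ay)) by ring.
  rewrite e1 e2.
  replace ((a*p+b*u)*(a*p+b*u)+(a*q+b*w)*(a*q+b*w)) with
    (a*a*(p*p+q*q)+(2*a*b)*(p*u+q*w)+b*b*(u*u+w*w)) by ring.
  rewrite h1 h2 h3; ring. }
assert (NB : 12*(bx*bx+by_*by_) = 4*(c*c+c*d+d*d)).
{ rewrite -kk.
  replace (k*k*(bx*bx+by_*by_)) with ((k*bx)*(k*bx)+(k*by_)*(k*by_)) by ring.
  rewrite e3 e4.
  replace ((c*p+d*u)*(c*p+d*u)+(c*q+d*w)*(c*q+d*w)) with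
    (c*c*(p*p+q*q)+(2*c*d)*(p*u+q*w)+d*d*(u*u+w*w)) by ring.
  rewrite h1 h2 h3; ring. }
pose proof (poly_ineq a b c d ha hb hc hd) as PI.
split.
- assert (0 <= 2*a*c+a*d+b*c+2*b*d).
  { repeat apply Rplus_le_le_0_compat; repeat apply Rmult_le_pos; lra. }
  lra.
- assert (ex: ax*bx+ay*by_ = (2*a*c+a*d+b*c+2*b*d)/6) by (field_simplify; lra).
  assert (ea: ax*ax+ay*ay = (a*a+a*b+b*b)/3) by (field_simplify; lra).
  assert (eb: bx*bx+by_*by_ = (c*c+c*d+d*d)/3) by (field_simplify; lra).
  rewrite ex ea eb. 
  replace ((a*a+a*b+b*b)/3*((c*c+c*d+d*d)/3)) with ((a*a+a*b+b*b)*(c*c+c*d+d*d)/9) by field.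
  replace (4*((2*a*c+a*d+b*c+2*b*d)/6)^2) with ((2*a*c+a*d+b*c+2*b*d)^2/9) by field.
  lra.
Qed.


Definition s3 := sqrt 3.
Lemma s3_sq : s3 * s3 = 3. Proof. unfold s3. apply sqrt_sqrt. lra. Qed.
Lemma s3_pos : 0 < s3. Proof. unfold s3. apply sqrt_lt_R0. lra. Qed.

Definition sec (x y : R) : nat :=
  if Rle_dec 0 y then (if Rle_dec y (s3*x) then 0%nat else if Rle_dec (-(s3*x)) y then 1%nat else 2%nat)
  else (if Rle_dec (s3*x) y then 3%nat else if Rle_dec y (-(s3*x)) then 4%nat else 5%nat).

Lemma sec_lt x y : (sec x y < 6)%nat.
Proof. unfold sec; repeat destruct Rle_dec; done. Qed.

Ltac use_dir p q u w ax ay bx by_ :=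
  let hs := fresh in pose proof s3_sq as hs;
  let H := fresh in
  assert (H : 0 <= ax*bx+ay*by_ /\ (ax*ax+ay*ay)*(bx*bx+by_*by_) <= 4*(ax*bx+ay*by_)^2)
    by (apply (sector_ok p q u w); lra);
  destruct H; apply close2; assumption.

Lemma sec_close x1 y1 x2 y2 M : sec x1 y1 = sec x2 y2 ->
  x1*x1+y1*y1 <= M -> x2*x2+y2*y2 <= M -> (x1-x2)^2+(y1-y2)^2 <= M.
Proof.
unfold sec; intros E h1 h2.
repeat destruct Rle_dec; try discriminate;
first [ use_dir 2 0 1 s3 x1 y1 x2 y2
      | use_dir 1 s3 (-1) s3 x1 y1 x2 y2
      | use_dir (-1) s3 (-2) 0 x1 y1 x2 y2
      | use_dir (-2) 0 (-1) (-s3) x1 y1 x2 y2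
      | use_dir (-1) (-s3) 1 (-s3) x1 y1 x2 y2
      | use_dir 1 (-s3) 2 0 x1 y1 x2 y2 ].
Qed.

Lemma no6 (X Y : 'I_6 -> R) (M : R) :
  0 < X ord0 -> Y ord0 = 0 ->
  (forall i, X i * X i + Y i * Y i <= M) ->
  (forall i j, i != j -> M < (X i - X j)^2 + (Y i - Y j)^2) -> False.
Proof.
intros hx hy hM hD.
pose g := fun i : 'I_6 => (inord (sec (X i) (Y i)) : 'I_6).
have gE : forall i, nat_of_ord (g i) = sec (X i) (Y i).
{ move=> i; rewrite /g inordK //; exact: sec_lt. }
have ginj : injective g.
{ move=> i j E. apply/eqP; apply: contraT => nij.
  have := hD i j nij. have : (X i - X j)^2 + (Y i - Y j)^2 <= M.
  { apply sec_close; [ by rewrite -!gE E | apply hM | apply hM ]. }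
  lra. }
have [h hK hK'] := injF_bij ginj.
set i5 : 'I_6 := inord 5.
set i := h i5.
have gi : sec (X i) (Y i) = 5%nat by rewrite -gE /i hK' /i5 inordK.
have g0 : sec (X ord0) (Y ord0) = 0%nat.
{ rewrite /sec hy. pose proof s3_pos. repeat destruct Rle_dec; try done; try lra; nra. }
have ni : i != ord0.
{ apply/eqP => E. by rewrite E g0 in gi. }
have := hD i ord0 ni.
have : (X i - X ord0)^2 + (Y i - Y ord0)^2 <= M.
{ move: gi (hM i) (hM ord0). rewrite /sec hy.
  pose proof s3_pos. have hp : 0 <= s3 * X ord0 by nra.
  repeat destruct Rle_dec; try discriminate; move=> _ h1 h2;
  use_dir 1 (-s3) 2 0 (X i) (Y i) (X ord0) 0. }
lra.
Qed.


Definition D x1 y1 x2 y2 := sqrt ((x1-x2)^2+(y1-y2)^2).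
Lemma D_euc x1 y1 x2 y2 : D x1 y1 x2 y2 = dist_euc x1 y1 x2 y2.
Proof. unfold D, dist_euc. rewrite !Rsqr_pow2. reflexivity. Qed.
Lemma D_sym x1 y1 x2 y2 : D x1 y1 x2 y2 = D x2 y2 x1 y1.
Proof. rewrite !D_euc. apply distance_symm. Qed.
Lemma D_tri x0 y0 x1 y1 x2 y2 : D x0 y0 x1 y1 <= D x0 y0 x2 y2 + D x2 y2 x1 y1.
Proof. rewrite !D_euc. apply triangle. Qed.
Lemma D_ge0 x1 y1 x2 y2 : 0 <= D x1 y1 x2 y2.
Proof. apply sqrt_pos. Qed.
Lemma D_sq x1 y1 x2 y2 : (D x1 y1 x2 y2)^2 = (x1-x2)^2+(y1-y2)^2.
Proof. unfold D. apply pow2_sqrt. apply Rplus_le_le_0_compat; apply pow2_ge_0. Qed.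
Lemma D_scale cx cy ax ay l :
  D (cx + l*(ax-cx)) (cy + l*(ay-cy)) cx cy = Rabs l * D ax ay cx cy.
Proof.
unfold D.
replace ((cx + l * (ax - cx) - cx) ^ 2 + (cy + l * (ay - cy) - cy) ^ 2)
  with (l^2 * ((ax-cx)^2+(ay-cy)^2)) by ring.
rewrite sqrt_mult_alt; [|apply pow2_ge_0]. rewrite <- Rsqr_pow2, sqrt_Rsqr_abs. reflexivity.
Qed.
Lemma D_scale2 cx cy ax ay l :
  D (cx + l*(ax-cx)) (cy + l*(ay-cy)) ax ay = Rabs (1-l) * D ax ay cx cy.
Proof.
unfold D.
replace ((cx + l * (ax - cx) - ax) ^ 2 + (cy + l * (ay - cy) - ay) ^ 2)
  with ((1-l)^2 * ((ax-cx)^2+(ay-cy)^2)) by ring.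
rewrite sqrt_mult_alt; [|apply pow2_ge_0]. rewrite <- Rsqr_pow2, sqrt_Rsqr_abs. reflexivity.
Qed.

Definition lam d a := if Rle_dec d a then 0 else (d - a)/d.

Lemma shrink cx cy ax ay rho ra : 0 < rho -> rho <= ra -> D ax ay cx cy <= rho + ra ->
  let l := lam (D ax ay cx cy) (ra - rho) in
  D (cx + l*(ax-cx)) (cy + l*(ay-cy)) cx cy <= 2*rho /\
  D (cx + l*(ax-cx)) (cy + l*(ay-cy)) ax ay <= ra - rho.
Proof.
intros h1 h2 h3 l. rewrite D_scale D_scale2.
pose proof (D_ge0 ax ay cx cy) as h0.
set (d := D ax ay cx cy) in *.
unfold l, lam. destruct Rle_dec as [h|h].
- simpl. rewrite Rabs_R0 Rminus_0_r Rabs_R1. lra.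
- assert (hd : 0 < d) by lra. simpl.
  assert (hl : 0 <= (d - (ra - rho))/d) by (apply Rmult_le_pos; [lra | left; apply Rinv_0_lt_compat; lra]).
  replace (1 - (d - (ra - rho))/d) with ((ra-rho)/d) by (field; lra).
  assert (hl2 : 0 <= (ra - rho)/d) by (apply Rmult_le_pos; [lra | left; apply Rinv_0_lt_compat; lra]).
  rewrite (Rabs_pos_eq _ hl) (Rabs_pos_eq _ hl2).
  split; field_simplify; lra.
Qed.

Lemma geo (cx cy rho : R) (ax ay ra : 'I_6 -> R) :
  0 < rho -> (forall i, rho <= ra i) ->
  (forall i, D (ax i) (ay i) cx cy <= rho + ra i) ->
  (forall i j, i != j -> ra i + ra j < D (ax i) (ay i) (ax j) (ay j)) -> False.
Proof.
intros hr hra hin hout.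
pose l := fun i => lam (D (ax i) (ay i) cx cy) (ra i - rho).
pose qx := fun i => cx + l i * (ax i - cx).
pose qy := fun i => cy + l i * (ay i - cy).
have hq : forall i, D (qx i) (qy i) cx cy <= 2*rho /\ D (qx i) (qy i) (ax i) (ay i) <= ra i - rho.
{ move=> i. exact: (shrink cx cy (ax i) (ay i) rho (ra i) hr (hra i) (hin i)). }
have hqq : forall i j, i != j -> 2*rho < D (qx i) (qy i) (qx j) (qy j).
{ move=> i j nij.
  have t1 := D_tri (ax i) (ay i) (ax j) (ay j) (qx i) (qy i).
  have t2 := D_tri (qx i) (qy i) (ax j) (ay j) (qx j) (qy j).
  have := hout i j nij. have [_ a1] := hq i. have [_ a2] := hq j.
  rewrite D_sym in a1. lra. }
pose Xp := fun i => qx i - cx. pose Yp := fun i => qy i - cy.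
pose M := 4*rho^2.
have hM : forall i, Xp i * Xp i + Yp i * Yp i <= M.
{ move=> i. have [a1 _] := hq i. have := D_sq (qx i) (qy i) cx cy.
  have := D_ge0 (qx i) (qy i) cx cy. rewrite /Xp /Yp /M. nra. }
have hD : forall i j, i != j -> M < (Xp i - Xp j)^2 + (Yp i - Yp j)^2.
{ move=> i j nij. have a1 := hqq i j nij. have := D_sq (qx i) (qy i) (qx j) (qy j).
  rewrite /Xp /Yp /M.
  replace (qx i - cx - (qx j - cx)) with (qx i - qx j) by ring.
  replace (qy i - cy - (qy j - cy)) with (qy i - qy j) by ring. nra. }
pose ux := Xp ord0. pose uy := Yp ord0.
pose N := ux*ux + uy*uy.
have hN : 0 < N.
{ have : 0 <= N by rewrite /N; nra.
  case => // hN0. exfalso.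
  have hx : ux = 0 by rewrite /N in hN0; nra.
  have hy : uy = 0 by rewrite /N in hN0; nra.
  have o1 : (ord0 : 'I_6) != inord 1 by rewrite -(inj_eq val_inj) /= inordK.
  have := hD _ _ o1. have := hM (inord 1). rewrite -/ux -/uy hx hy. nra. }
apply: (no6 (fun i => ux * Xp i + uy * Yp i) (fun i => ux * Yp i - uy * Xp i) (N * M)).
- rewrite -/ux -/uy. rewrite /N in hN. nra.
- rewrite -/ux -/uy. ring.
- move=> i. have := hM i.
  have -> : (ux * Xp i + uy * Yp i) * (ux * Xp i + uy * Yp i) +
    (ux * Yp i - uy * Xp i) * (ux * Yp i - uy * Xp i) = N * (Xp i * Xp i + Yp i * Yp i) by rewrite /N; ring.
  move=> h. apply Rmult_le_compat_l; lra.
- move=> i j nij. have := hD i j nij.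
  have -> : (ux * Xp i + uy * Yp i - (ux * Xp j + uy * Yp j)) ^ 2 +
    (ux * Yp i - uy * Xp i - (ux * Yp j - uy * Xp j)) ^ 2 =
    N * ((Xp i - Xp j) ^ 2 + (Yp i - Yp j) ^ 2) by rewrite /N; ring.
  move=> h. apply Rmult_lt_compat_l; lra.
Qed.

Close Scope R_scope.

Lemma min_exists (T : finType) (f : T -> R) : 0 < #|T| -> exists v, forall u, (f v <= f u)%R.
Proof.
move=> hT.
suff: forall s : seq T, s <> [::] -> exists2 v, v \in s & forall u, u \in s -> (f v <= f u)%R.
{ move=> H. have [x _] : exists x : T, true by case/card_gt0P: hT => x _; exists x.
  have [v _ hv] := H (enum T) (ltac:(move=> E; have := mem_enum T x; rewrite E //)).
  exists v => u. apply: hv. by rewrite mem_enum. }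
elim=> [//|a s IH] _.
case: s IH => [|b s] IH.
- exists a; first by rewrite inE. move=> u; rewrite inE => /eqP ->; lra.
- have [w hw hw'] := IH ltac:(done).
  destruct (Rle_dec (f a) (f w)) as [h|h].
  + exists a; first by rewrite inE eqxx.
    move=> u; rewrite inE => /orP [/eqP ->|hu]; first lra.
    have := hw' u hu. lra.
  + exists w; first by rewrite inE hw orbT.
    move=> u; rewrite inE => /orP [/eqP ->|hu]; first lra.
    exact: hw' u hu.
Qed.

Theorem lemma5p1 (T : finType) (adj : rel T) :
  simple_graph adj ->
  circle_intersection_graph adj ->
  0 < #|T| ->
  exists v : T, ~ has_induced_K16_in adj (closed_nbhd adj v).
Proof.
move=> [hsym hirr] [cx [cy [r [hr hadj]]]] hT.
have [v hv] := @min_exists T r hT.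
exists v => [[x [y [hx [hy [yinj [hxy hyy]]]]]]].
have yv : forall i, y i != v /\ adj v (y i).
{ move=> i.
  have [j nij] : exists j, j != i.
  { exists (if i == ord0 then inord 1 else ord0).
    case: (i =P ord0) => [E|/eqP ne]; last by rewrite eq_sym.
    by rewrite E -(inj_eq val_inj) /= inordK. }
  have hne : y j != y i by apply: contra nij => /eqP /yinj ->.
  have H1 := hyy _ _ nij.
  have H2 := hy i. have H3 := hy j.
  rewrite /closed_nbhd in H2 H3.
  case/orP: H2 => [/eqP E|a]; last first.
  { split => //. apply/eqP => E. by rewrite E hirr in a. }
  exfalso. case/orP: H3 => [/eqP E'|a].
  - by rewrite E E' eqxx in hne.
  - by move: H1; rewrite E hsym a. }
apply: (geo (cx v) (cy v) (r v) (fun i => cx (y i)) (fun i => cy (y i)) (fun i => r (y i))).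
- exact: hr.
- move=> i; exact: hv.
- move=> i /=. have [n a] := yv i.
  have := (hadj v (y i) ltac:(by rewrite eq_sym)).1 a.
  rewrite /disks_intersect -/(D _ _ _ _) D_sym. lra.
- move=> i j nij /=.
  have hne : y i != y j by apply: contra nij => /eqP /yinj ->.
  have := hyy _ _ nij => /negP na.
  destruct (Rlt_le_dec (r (y i) + r (y j)) (D (cx (y i)) (cy (y i)) (cx (y j)) (cy (y j)))) as [h|h] => //.
  exfalso; apply: na. apply/(hadj _ _ hne). exact: h.
Qed.
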